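(* Let $\mathcal{L}:\mathbb{R}^p\to\mathbb{R}$ be continuously differentiable, let $\theta_0\in\mathbb{R}^p$, and let $\mathcal{B}(\theta_0)\subseteq\mathbb{R}^p$ be a non-empty set containing $\theta_0$. Let $(\theta_t)_{t\ge 0}$ be generated by gradient descent $\theta_{t+1}=\theta_t-\eta_t\nabla_\theta\mathcal{L}(\theta_t)$, and assume all iterates $\theta_t$, $t\ge1$, lie in $\mathcal{B}(\theta_0)$. Fix a step $t$ and suppose: (RSC condition) there is a non-empty set $\mathcal{N}_t$ such that (a) $\mathcal{N}_t\subseteq\mathcal{B}(\theta_0)$; (b) either (b.1) $\theta_{t+1}\in\mathcal{N}_t$ and either $\theta_t\notin\mathcal{N}_t$ or $\mathcal{L}(\theta_t)\ne\inf_{\theta\in\mathcal{N}_t}\mathcal{L}(\theta)$, or (b.2) there exists $\theta'\in\mathcal{N}_t$ with $\mathcal{L}(\theta')<\mathcal{L}(\theta_t)$; and (c) $\mathcal{L}$ satisfies $\alpha_t$-restricted strong convexity with respect to $(\mathcal{N}_t,\theta_t)$ for some $\alpha_t>0$; (Smoothness condition) $\mathcal{L}$ is $\beta$-smooth on $\mathcal{B}(\theta_0)$ for some $\beta>0$, i.e. $\mathcal{L}(\theta')\le\mathcal{L}(\theta)+\langle\theta'-\theta,\nabla_\theta\mathcal{L}(\theta)\rangle+\frac{\beta}{2}\|\theta'-\theta\|_2^2$ for all $\theta,\theta'\in\mathcal{B}(\theta_0)$. Assume $\alpha_t\le\beta$ and $\eta_t=\omega_t/\beta$ for some $\omega_t\in(0,2)$.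 If $\mathcal{L}(\theta_t)\ne\inf_{\theta\in\mathcal{B}(\theta_0)}\mathcal{L}(\theta)$, then $$0\le\gamma_t:=\frac{\inf_{\theta\in\mathcal{N}_t}\mathcal{L}(\theta)-\inf_{\theta\in\mathcal{B}(\theta_0)}\mathcal{L}(\theta)}{\mathcal{L}(\theta_t)-\inf_{\theta\in\mathcal{B}(\theta_0)}\mathcal{L}(\theta)}<1$$ and $$\mathcal{L}(\theta_{t+1})-\inf_{\theta\in\mathcal{B}(\theta_0)}\mathcal{L}(\theta)\le\Big(1-\frac{\alpha_t\omega_t(1-\gamma_t)}{\beta}(2-\omega_t)\Big)\Big(\mathcal{L}(\theta_t)-\inf_{\theta\in\mathcal{B}(\theta_0)}\mathcal{L}(\theta)\Big).$$
   Context: A function $\mathcal{L}$ satisfies $\alpha$-restricted strong convexity ($\alpha$-RSC) with respect to a tuple $(\mathcal{S},\theta)$, where $\mathcal{S}\subseteq\mathbb{R}^p$ and $\theta\in\mathbb{R}^p$ is fixed, if $\alpha>0$ and for every $\theta'\in\mathcal{S}$: $\mathcal{L}(\theta')\ge\mathcal{L}(\theta)+\langle\theta'-\theta,\nabla_\theta\mathcal{L}(\theta)\rangle+\frac{\alpha}{2}\|\theta'-\theta\|_2^2$. *)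

(* Defs.v *)
From HB Require Import structures.
From mathcomp Require Import all_boot all_order all_algebra.
From mathcomp Require Import all_classical all_reals all_analysis.
Set Implicit Arguments. Unset Strict Implicit. Unset Printing Implicit Defensive.
Import Order.TTheory GRing.Theory Num.Theory.
Import numFieldNormedType.Exports.
Local Open Scope classical_set_scope.
Local Open Scope ring_scope.

Section Defs.
Context {R : realType} {p : nat}.

Definition dotp (u v : 'rV[R]_p) : R := \sum_(i < p) u 0 i * v 0 i.
Definition sqnorm2 (u : 'rV[R]_p) : R := dotp u u.

Definition grad (f : 'rV[R]_p -> R) (x : 'rV[R]_p) : 'rV[R]_p :=
  \row_(i < p) ('d f x) (delta_mx 0 i : 'rV[R]_p).

Definition cont_diff (f : 'rV[R]_p -> R) : Prop :=
  (forall x, differentiable f x) /\ continuous (grad f).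

Definition RSC (f : 'rV[R]_p -> R) (alpha : R) (S : set 'rV[R]_p) (th : 'rV[R]_p) : Prop :=
  0 < alpha /\
  forall th', S th' ->
    f th + dotp (th' - th) (grad f th) + alpha / 2 * sqnorm2 (th' - th) <= f th'.

Definition smooth_on (f : 'rV[R]_p -> R) (beta : R) (B : set 'rV[R]_p) : Prop :=
  forall th th', B th -> B th' ->
    f th' <= f th + dotp (th' - th) (grad f th) + beta / 2 * sqnorm2 (th' - th).

End Defs.

(* Main.v *)
Require Import Defs.
From HB Require Import structures.
From mathcomp Require Import all_boot all_order all_algebra.
From mathcomp Require Import all_classical all_reals all_analysis.
From mathcomp Require Import ring lra.
Import Order.TTheory GRing.Theory Num.Theory.
Import numFieldNormedType.Exports.
Local Open Scope classical_set_scope.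
Local Open Scope ring_scope.


Lemma rsc_bound (R : realType) (p : nat) (d g : 'rV[R]_p) (a : R) :
  0 < a -> - (sqnorm2 g / (2 * a)) <= dotp d g + a / 2 * sqnorm2 d.
Proof.
move=> a0; rewrite /sqnorm2 /dotp -subr_ge0 opprK.
have -> : \sum_(i < p) d 0 i * g 0 i + a / 2 * (\sum_(i < p) d 0 i * d 0 i) +
   (\sum_(i < p) g 0 i * g 0 i) / (2 * a) =
   \sum_(i < p) ((a * d 0 i + g 0 i) ^+ 2 / (2 * a)).
  rewrite mulr_sumr mulr_suml -!big_split /=; apply: eq_bigr => i _.
  field; rewrite gt_eqF //.
apply: sumr_ge0 => i _; apply: divr_ge0; first exact: sqr_ge0.
by rewrite mulr_ge0 // ltW.
Qed.

Lemma step_bound (R : realType) (p : nat) (g : 'rV[R]_p) (e : R) :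
  dotp (- (e *: g)) g = - e * sqnorm2 g /\
  sqnorm2 (- (e *: g)) = e ^+ 2 * sqnorm2 g.
Proof.
rewrite /sqnorm2 /dotp !mulr_sumr; split; apply: eq_bigr => i _;
  rewrite !mxE; ring.
Qed.

Theorem theorem1 (R : realType) (p : nat) (L : 'rV[R]_p -> R)
  (theta0 : 'rV[R]_p) (B : set 'rV[R]_p)
  (theta : nat -> 'rV[R]_p) (eta : nat -> R) (t : nat)
  (N : set 'rV[R]_p) (alpha beta omega : R) :
  cont_diff L ->
  B theta0 ->
  theta 0%N = theta0 ->
  (forall s, theta s.+1 = theta s - eta s *: grad L (theta s)) ->
  (forall s, (1 <= s)%N -> B (theta s)) ->
  (* RSC condition *)
  N !=set0 ->
  N `<=` B ->
  ((N (theta t.+1) /\ (~ N (theta t) \/ L (theta t) <> inf (L @` N)))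
    \/ (exists th', N th' /\ L th' < L (theta t))) ->
  RSC L alpha N (theta t) ->
  (* smoothness condition *)
  0 < beta ->
  smooth_on L beta B ->
  alpha <= beta ->
  0 < omega < 2 ->
  eta t = omega / beta ->
  (* inf of L over B is a real number (implicit in the paper) *)
  has_lbound (L @` B) ->
  L (theta t) <> inf (L @` B) ->
  let gamma := (inf (L @` N) - inf (L @` B)) / (L (theta t) - inf (L @` B)) in
  0 <= gamma < 1 /\
  L (theta t.+1) - inf (L @` B)
    <= (1 - alpha * omega * (1 - gamma) / beta * (2 - omega))
       * (L (theta t) - inf (L @` B)).
Proof.
move=> _ B0 th0 step Bs Nne NB hb [a0 rsc] b0 sm hab oo et lbB neq gamma; case/andP: oo => o0 o2.
set x := theta t; set g := grad L x; set S := sqnorm2 g.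
set LB := inf (L @` B); set LN := inf (L @` N).
have Bx : B x by rewrite /x; case: (t) => [|s]; [rewrite th0 | apply: Bs].
have Bx1 : B (theta t.+1) by apply: Bs.
have ex1 : theta t.+1 - x = - (eta t *: g) by rewrite step /x addrAC subrr add0r.
have H1 : L (theta t.+1) <= L x - omega / beta * S + beta / 2 * (omega / beta) ^+ 2 * S.
  have := sm _ _ Bx Bx1; rewrite ex1; have [-> ->] := step_bound _ _ g (eta t).
  by rewrite et /S; lra.
have H2 : forall th', N th' -> L x - S / (2 * alpha) <= L th'.
  move=> th' Nth; have := rsc _ Nth; have := rsc_bound _ _ (th' - x) g _ a0.
  rewrite /S /g; lra.
have lbN : lbound (L @` N) (L x - S / (2 * alpha)).
  by move=> _ [th' Nth <-]; apply: H2.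
have HN : L x - S / (2 * alpha) <= LN.
  by apply: lb_le_inf => //; case: Nne => y Ny; exists (L y), y.
have hlN : has_lbound (L @` N) by exists (L x - S / (2 * alpha)).
have LNle : forall th', N th' -> LN <= L th'.
  by move=> th' Nth; apply: (ge_inf hlN); exists th'.
have LBle : forall th', B th' -> LB <= L th'.
  by move=> th' Bth; apply: (ge_inf lbB); exists th'.
have LBN : LB <= LN.
  apply: lb_le_inf; first by case: Nne => y Ny; exists (L y), y.
  by move=> _ [th' Nth <-]; apply/LBle/NB.
have Dpos : 0 < L x - LB.
  by rewrite subr_gt0 lt_neqAle LBle // andbT; apply/eqP => E; apply: neq; exact: esym E.
have S0 : 0 <= S by rewrite /S /sqnorm2 /dotp; apply: sumr_ge0 => i _; exact: sqr_ge0.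
have kpos : 0 < omega * (2 - omega) / beta by rewrite divr_gt0 // mulr_gt0 // subr_gt0.
have H1' : L (theta t.+1) <= L x - omega * (2 - omega) / beta * S / 2.
  apply: (le_trans H1); rewrite le_eqVlt; apply/orP; left; apply/eqP.
  field; rewrite gt_eqF //.
have HNx : L x - LN <= S / (2 * alpha) by lra.
have LNlt : LN < L x.
  case: hb => [[Nx1 [nNx|neqN]] | [th' [Nth lt]]]; last first.
  - by apply: le_lt_trans (LNle _ Nth) lt.
  - rewrite lt_neqAle; apply/andP; split; first by apply/eqP => E; apply: neqN.
    apply: le_trans (LNle _ Nx1) (le_trans H1' _).
    rewrite gerBl; apply: divr_ge0 => //; exact: mulr_ge0 (ltW kpos) S0.
  - have [S00|Sp] := eqVneq S 0.
      have gz : g = 0.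
        apply/rowP => i; rewrite [RHS]mxE; apply/eqP; rewrite -sqrf_eq0.
        have : \sum_(j < p) g 0 j * g 0 j = 0 by exact: S00.
        move/eqP; rewrite psumr_eq0; last by move=> j _; exact: sqr_ge0.
        by move/allP => /(_ i (mem_index_enum _)) /=; rewrite expr2.
      by exfalso; apply: nNx; move: Nx1; rewrite step -/x -/g gz scaler0 subr0.
    have Sp' : 0 < S by rewrite lt_neqAle eq_sym Sp.
    apply: le_lt_trans (LNle _ Nx1) _; apply: le_lt_trans H1' _.
    rewrite ltrBlDr ltrDl; apply: divr_gt0 => //; exact: mulr_gt0.
set k := omega * (2 - omega) / beta.
have aS : 2 * alpha * (L x - LN) <= S.
  have e1 : S / (2 * alpha) * (2 * alpha) = S by field; rewrite gt_eqF.
  have h : 0 <= (S / (2 * alpha) - (L x - LN)) * (2 * alpha).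
    by apply: mulr_ge0; [rewrite subr_ge0 | rewrite mulr_ge0 // ltW].
  lra.
have kk : 0 <= k * (S - 2 * alpha * (L x - LN)).
  by apply: mulr_ge0; [exact: ltW | rewrite subr_ge0].
have Dn : L x - LB != 0 by rewrite gt_eqF.
split.
  apply/andP; split; first by apply: divr_ge0; [rewrite subr_ge0 | exact: ltW].
  rewrite /gamma ltr_pdivrMr // mul1r; lra.
have key : (1 - alpha * omega * (1 - gamma) / beta * (2 - omega)) * (L x - LB)
  = L x - LB - alpha * k * (L x - LN).
  rewrite /gamma /k; field; by apply/andP; split; [rewrite gt_eqF | exact: Dn].
rewrite key; move: H1' kk; rewrite -/k; clearbody k; move=> H1' kk; lra.
Qed.
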